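(* Let $\mathsf{R}^s$ be the set of all symmetric Epstein relations and $\mathsf{R}^n$ the set of all Epstein relations $\mathfrak{R}$ satisfying: for all $\varphi,\psi\in\mathsf{FOR}$, if $\langle\neg\varphi,\psi\rangle\in\mathfrak{R}$ then $\langle\varphi,\psi\rangle\in\mathfrak{R}$. Neither $\mathsf{R}^s$ nor $\mathsf{R}^n$ is definable.
   Context: Language: propositional letters $\Phi=\{p_0,p_1,\dots\}$; connectives $\neg$, $\lor,\wedge,\to,\leftrightarrow,\vartriangle,\looparrowright$; $\mathsf{FOR}$ the set of all formulas. An Epstein model is $\langle v,\mathfrak{R}\rangle$ with $v:\Phi\to\{0,1\}$ and $\mathfrak{R}\subseteq\mathsf{FOR}^2$ (an Epstein relation); truth: letters via $v$, boolean connectives classical, $\langle v,\mathfrak{R}\rangle\vDash\varphi\vartriangle\psi$ iff both true and $\langle\varphi,\psi\rangle\in\mathfrak{R}$; $\langle v,\mathfrak{R}\rangle\vDash\varphi\looparrowright\psi$ iff $\varphi\to\psi$ true and $\langle\varphi,\psi\rangle\in\mathfrak{R}$. $\mathfrak{R}\vDash\varphi$ iff $\langle v,\mathfrak{R}\rangle\vDash\varphi$ for every valuation $v$; $\mathfrak{R}\vDash\Gamma$ iff $\mathfrak{R}\vDash\gamma$ for every $\gamma\in\Gamma$. A set $\mathsf{K}$ of Epstein relations is definable iff there is $\Gamma\subseteq\mathsf{FOR}$ such that for every Epstein relation $\mathfrak{R}$: $\mathfrak{R}\vDash\Gamma$ iff $\mathfrak{R}\in\mathsf{K}$. *)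

(* Defs.v *)
Inductive formula : Type :=
  | Var : nat -> formula
  | Neg : formula -> formula
  | Or : formula -> formula -> formula
  | And : formula -> formula -> formula
  | Imp : formula -> formula -> formula
  | Iff : formula -> formula -> formula
  | RelAnd : formula -> formula -> formula
  | RelImp : formula -> formula -> formula.

Definition epstein_relation : Type := formula -> formula -> Prop.

Definition valuation : Type := nat -> bool.

Fixpoint sat (v : valuation) (R : epstein_relation) (f : formula) : Prop :=
  match f with
  | Var n => v n = true
  | Neg a => ~ sat v R a
  | Or a b => sat v R a \/ sat v R b
  | And a b => sat v R a /\ sat v R b
  | Imp a b => sat v R a -> sat v R b
  | Iff a b => (sat v R a <-> sat v R b)
  | RelAnd a b => (sat v R a /\ sat v R b) /\ R a b
  | RelImp a b => (sat v R a -> sat v R b) /\ R a b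
  end.

Definition rvalid (R : epstein_relation) (f : formula) : Prop :=
  forall v : valuation, sat v R f.

Definition rvalid_set (R : epstein_relation) (G : formula -> Prop) : Prop :=
  forall g, G g -> rvalid R g.

Definition definable (K : epstein_relation -> Prop) : Prop :=
  exists G : formula -> Prop, forall R : epstein_relation, rvalid_set R G <-> K R.

Definition R_sym (R : epstein_relation) : Prop :=
  forall a b, R a b -> R b a.

Definition R_neg (R : epstein_relation) : Prop :=
  forall a b, R (Neg a) b -> R a b.

(* Main.v *)
Require Import Defs.
From Stdlib Require Import Setoid.

Lemma agree (v : valuation) (R S : epstein_relation) :
  (forall a b, (sat v R a -> sat v R b) -> (R a b <-> S a b)) ->
  forall f, sat v R f <-> sat v S f.
Proof.
  intros H f; induction f; simpl; try tauto.
  - rewrite <- IHf1, <- IHf2; split; intros [[Ha Hb] Hr]; split; auto;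
      [apply (H f1 f2) | apply (H f1 f2)]; auto.
  - rewrite <- IHf1, <- IHf2; split; intros [Hi Hr]; split; auto;
      [apply (H f1 f2) | apply (H f1 f2)]; auto.
Qed.

Lemma nondef (K : epstein_relation -> Prop) (R' R0 R1 : epstein_relation) :
  K R0 -> K R1 -> ~ K R' ->
  (forall v, v 0 = true -> forall f, sat v R' f <-> sat v R1 f) ->
  (forall v, v 0 = false -> forall f, sat v R' f <-> sat v R0 f) ->
  ~ definable K.
Proof.
  intros K0 K1 NK H1 H0 [G HG].
  apply NK, HG. intros g Hg v.
  destruct (v 0) eqn:E.
  - apply (H1 v E). apply (proj2 (HG R1) K1 g Hg v).
  - apply (H0 v E). apply (proj2 (HG R0) K0 g Hg v).
Qed.

Theorem mainTheorem11 : ~ definable R_sym /\ ~ definable R_neg.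
Proof.
  split.
  - apply (nondef R_sym (fun a b => a = Var 0 /\ b = Neg (Var 0))
            (fun a b => (a = Var 0 /\ b = Neg (Var 0)) \/ (a = Neg (Var 0) /\ b = Var 0))
            (fun _ _ => False)).
    + unfold R_sym; intros a b [[-> ->]|[-> ->]]; auto.
    + unfold R_sym; tauto.
    + intros Hs. destruct (Hs _ _ (conj eq_refl eq_refl)) as [Ha _]; discriminate.
    + intros v E f; apply agree; intros a b Hi; split; [|tauto].
      intros [-> ->]. simpl in Hi. rewrite E in Hi. exfalso. apply Hi; reflexivity.
    + intros v E f; apply agree; intros a b Hi; split; [tauto|].
      intros [Hx|[-> ->]]; auto. simpl in Hi. exfalso. rewrite E in Hi.
      assert (false = true) by (apply Hi; congruence). discriminate.
  - set (X := And (Var 0) (Neg (Var 0))).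
    apply (nondef R_neg (fun a b => a = Neg (Var 0) /\ b = X)
            (fun _ _ => False)
            (fun a b => (a = Neg (Var 0) /\ b = X) \/ (a = Var 0 /\ b = X))).
    + unfold R_neg; tauto.
    + unfold R_neg; intros a b [[Ha ->]|[Ha _]]; [|discriminate].
      injection Ha as ->. auto.
    + intros Hs. destruct (Hs _ _ (conj eq_refl eq_refl)) as [Ha _]; discriminate.
    + intros v E f; apply agree; intros a b Hi; split; [tauto|].
      intros [Hx|[-> ->]]; auto. simpl in Hi. exfalso. rewrite E in Hi.
      destruct (Hi eq_refl) as [_ Hn]. apply Hn; reflexivity.
    + intros v E f; apply agree; intros a b Hi; split; [|tauto].
      intros [-> ->]. simpl in Hi. rewrite E in Hi.
      destruct Hi as [H _]; [intro; discriminate|discriminate].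
Qed.
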